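(* Let $\mathcal A$ be cocomplete, $\lambda:MH\to HM$ a distributive law of the pointed endofunctor $(M,\eta)$ over $H$ with $\lambda$-interpretation $b:MC\to C$, and let $k=c^{-1}\cdot Hb$ and $k'=b\cdot Mk:MHMC\to C$. Then $(C,k')$ is a completely iterative algebra for $MHM$.
   Context: $\mathcal A$ has binary products and coproducts; $H:\mathcal A\to\mathcal A$ is a functor with terminal coalgebra $c:C\to HC$ (an isomorphism by Lambek's lemma). A pointed endofunctor is a functor $M$ with a natural transformation $\eta:\mathrm{Id}\to M$. A distributive law of $(M,\eta)$ over $H$ is a natural transformation $\lambda:MH\to HM$ with $\lambda\cdot\eta H=H\eta$. Its $\lambda$-interpretation is the unique morphism $b:MC\to C$ with $c\cdot b=Hb\cdot\lambda_C\cdot Mc$; it satisfies $b\cdot\eta_C=\mathrm{id}_C$. A $G$-algebra $a:GA\to A$ is a completely iterative algebra if every $e:X\to GX+A$ has a unique $e^\dagger:X\to A$ with $e^\dagger=[a,\mathrm{id}_A]\cdot(Ge^\dagger+\mathrm{id}_A)\cdot e$. *)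

(* Defs.v *)
Set Implicit Arguments.
Unset Strict Implicit.

Record Category := {
  obj :> Type;
  hom : obj -> obj -> Type;
  idm : forall a, hom a a;
  comp : forall a b c, hom b c -> hom a b -> hom a c;
  comp_id_l : forall a b (f : hom a b), comp (idm b) f = f;
  comp_id_r : forall a b (f : hom a b), comp f (idm a) = f;
  comp_assoc : forall a b c d (f : hom c d) (g : hom b c) (h : hom a b),
      comp f (comp g h) = comp (comp f g) h
}.
Arguments idm {c0} a.
Arguments comp {c0 a b c} _ _.
Arguments hom {c0} _ _.

Declare Scope cat_scope.
Open Scope cat_scope.
Notation "f ∘ g" := (comp f g) (at level 40, left associativity) : cat_scope.

Record Functor (A B : Category) := {
  fobj :> A -> B;
  fmap : forall a b, hom a b -> hom (fobj a) (fobj b);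
  fmap_id : forall a, fmap (idm a) = idm (fobj a);
  fmap_comp : forall a b c (f : hom b c) (g : hom a b),
      fmap (f ∘ g) = fmap f ∘ fmap g
}.
Arguments fmap {A B} f0 {a b} _.

Definition Fid (A : Category) : Functor A A :=
  {| fobj := fun a => a; fmap := fun a b f => f;
     fmap_id := fun a => eq_refl; fmap_comp := fun a b c f g => eq_refl |}.

Program Definition Fcomp (A B D : Category) (G : Functor B D) (F : Functor A B)
  : Functor A D :=
  {| fobj := fun a => G (F a);
     fmap := fun a b f => fmap G (fmap F f) |}.
Next Obligation. intros; simpl; now rewrite !fmap_id. Qed.
Next Obligation. intros; simpl; now rewrite !fmap_comp. Qed.

Record HasCoproducts (A : Category) := {
  coprod : A -> A -> A;
  cinl : forall a b, hom a (coprod a b);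
  cinr : forall a b, hom b (coprod a b);
  copair : forall a b x, hom a x -> hom b x -> hom (coprod a b) x;
  copair_inl : forall a b x (f : hom a x) (g : hom b x), copair f g ∘ cinl a b = f;
  copair_inr : forall a b x (f : hom a x) (g : hom b x), copair f g ∘ cinr a b = g;
  copair_unique : forall a b x (f : hom a x) (g : hom b x) (h : hom (coprod a b) x),
      h ∘ cinl a b = f -> h ∘ cinr a b = g -> h = copair f g
}.
Arguments coprod {A} _ _ _.
Arguments cinl {A} _ {a b}.
Arguments cinr {A} _ {a b}.
Arguments copair {A} _ {a b x} _ _.

Definition coprod_map (A : Category) (cp : HasCoproducts A) (a b a' b' : A)
  (f : hom a a') (g : hom b b') : hom (coprod cp a b) (coprod cp a' b') :=
  copair cp (cinl cp ∘ f) (cinr cp ∘ g).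
Arguments coprod_map {A} cp {a b a' b'} f g.

Record HasProducts (A : Category) := {
  prod : A -> A -> A;
  pfst : forall a b, hom (prod a b) a;
  psnd : forall a b, hom (prod a b) b;
  pair : forall a b x, hom x a -> hom x b -> hom x (prod a b);
  pair_fst : forall a b x (f : hom x a) (g : hom x b), pfst a b ∘ pair f g = f;
  pair_snd : forall a b x (f : hom x a) (g : hom x b), psnd a b ∘ pair f g = g;
  pair_unique : forall a b x (f : hom x a) (g : hom x b) (h : hom x (prod a b)),
      pfst a b ∘ h = f -> psnd a b ∘ h = g -> h = pair f g
}.

Record SmallCategory := {
  sobj : Set;
  shom : sobj -> sobj -> Set;
  sid : forall i, shom i i;
  scomp : forall i j k, shom j k -> shom i j -> shom i k;
  scomp_id_l : forall i j (f : shom i j), scomp (sid j) f = f;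
  scomp_id_r : forall i j (f : shom i j), scomp f (sid i) = f;
  scomp_assoc : forall i j k l (f : shom k l) (g : shom j k) (h : shom i j),
      scomp f (scomp g h) = scomp (scomp f g) h
}.
Arguments sid {s} i.
Arguments scomp {s i j k} _ _.

Record Diagram (J : SmallCategory) (A : Category) := {
  dobj : sobj J -> A;
  dmap : forall i j, shom i j -> hom (dobj i) (dobj j);
  dmap_id : forall i, dmap (sid i) = idm (dobj i);
  dmap_comp : forall i j k (f : shom j k) (g : shom i j),
      dmap (scomp f g) = dmap f ∘ dmap g
}.
Arguments dmap {J A} d {i j} _.

Definition is_cocone (J : SmallCategory) (A : Category) (D : Diagram J A)
  (X : A) (tau : forall i, hom (dobj D i) X) : Prop :=
  forall i j (f : shom i j), tau j ∘ dmap D f = tau i.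
Arguments is_cocone {J A} D {X} tau.

Definition is_colimit (J : SmallCategory) (A : Category) (D : Diagram J A)
  (L : A) (iota : forall i, hom (dobj D i) L) : Prop :=
  is_cocone D iota /\
  forall (X : A) (tau : forall i, hom (dobj D i) X),
    is_cocone D tau -> exists! u : hom L X, forall i, u ∘ iota i = tau i.
Arguments is_colimit {J A} D {L} iota.

Definition cocomplete (A : Category) : Prop :=
  forall (J : SmallCategory) (D : Diagram J A),
    exists (L : A) (iota : forall i, hom (dobj D i) L), is_colimit D iota.

Definition is_terminal_coalgebra (A : Category) (H : Functor A A) (C : A)
  (c : hom C (H C)) : Prop :=
  forall (X : A) (x : hom X (H X)), exists! h : hom X C, c ∘ h = fmap H h ∘ x.

Definition is_natural (A : Category) (F G : Functor A A)
  (t : forall a, hom (F a) (G a)) : Prop :=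
  forall a b (f : hom a b), t b ∘ fmap F f = fmap G f ∘ t a.
Arguments is_natural {A} F G t.

Definition is_distributive_law (A : Category) (M H : Functor A A)
  (eta : forall a, hom a (M a)) (lam : forall a, hom (M (H a)) (H (M a))) : Prop :=
  is_natural (Fcomp M H) (Fcomp H M) lam /\
  forall a, lam a ∘ eta (H a) = fmap H (eta a).

Definition is_lambda_interpretation (A : Category) (M H : Functor A A)
  (lam : forall a, hom (M (H a)) (H (M a))) (C : A) (c : hom C (H C))
  (b : hom (M C) C) : Prop :=
  (c ∘ b = fmap H b ∘ lam C ∘ fmap M c) /\
  forall b' : hom (M C) C, c ∘ b' = fmap H b' ∘ lam C ∘ fmap M c -> b' = b.

Definition completely_iterative (A : Category) (cp : HasCoproducts A)
  (G : Functor A A) (X0 : A) (a : hom (G X0) X0) : Prop :=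
  forall (X : A) (e : hom X (coprod cp (G X) X0)),
    exists! s : hom X X0,
      s = copair cp a (idm X0) ∘ coprod_map cp (fmap G s) (idm X0) ∘ e.
Arguments is_terminal_coalgebra {A} H {C} c.
Arguments is_distributive_law {A} M H eta lam.
Arguments is_lambda_interpretation {A} M H lam {C} c b.
Arguments completely_iterative {A} cp G {X0} a.

(* Main.v *)
Require Import Defs.

Definition nat_hom (i j : nat) : Set := {u : unit | i = j}.

Definition natDisc : SmallCategory.
Proof.
  refine {| sobj := nat; shom := nat_hom; sid := fun i => exist _ tt eq_refl;
    scomp := fun i j k f g => exist _ tt (eq_trans (proj2_sig g) (proj2_sig f)) |}.
  - intros i j [[] p]; destruct p; reflexivity.
  - intros i j [[] p]; destruct p; reflexivity.
  - intros i j k l [[] p] [[] q] [[] r]; destruct p, q, r; reflexivity.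
Defined.

Definition natDiag (A : Category) (Y : nat -> A) : Diagram natDisc A.
Proof.
  refine (@Build_Diagram natDisc A Y
    (fun (i j : nat) (f : nat_hom i j) => match proj2_sig f in _ = j' return hom (Y i) (Y j') with
                         | eq_refl => idm (Y i) end) _ _).
  - intros i; reflexivity.
  - intros i j k [[] p] [[] q]; destruct p; destruct q; simpl.
    symmetry; apply comp_id_l.
Defined.

Lemma nat_coprod (A : Category) (Hcoc : cocomplete A) (Y : nat -> A) :
  exists (Z : A) (iota : forall n, hom (Y n) Z),
   forall X (tau : forall n, hom (Y n) X), exists! u : hom Z X, forall n, u ∘ iota n = tau n.
Proof.
  destruct (Hcoc natDisc (natDiag A Y)) as [L [iota [_ Hu]]].
  exists L, iota. intros X tau. apply Hu.
  intros i j [[] p]; destruct p; simpl. apply comp_id_r.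
Qed.

Definition is_sol (A:Category) (H : Functor A A) (C:A) (c : hom C (H C)) (Y : nat -> A)
  (d : forall n, hom (Y n) (H (Y (S (S n))))) (u : forall n, hom (Y n) C) : Prop :=
  forall n, c ∘ u n = fmap H (u (S (S n))) ∘ d n.
Arguments is_sol {A} H {C} c Y d u.

Lemma sol_ex_uniq (A : Category) (Hcoc : cocomplete A) (H : Functor A A) (C : A)
  (c : hom C (H C)) (Hterm : is_terminal_coalgebra H c) (Y : nat -> A)
  (d : forall n, hom (Y n) (H (Y (S (S n))))) :
  (exists u, is_sol H c Y d u) /\
  (forall u v, is_sol H c Y d u -> is_sol H c Y d v -> forall n, u n = v n).
Proof.
  destruct (nat_coprod A Hcoc Y) as [Z [iota Hu]].
  destruct (Hu (H Z) (fun n => fmap H (iota (S (S n))) ∘ d n)) as [dz [Hdz _]].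
  assert (key: forall u, is_sol H c Y d u -> forall U : hom Z C,
             (forall n, U ∘ iota n = u n) -> c ∘ U = fmap H U ∘ dz).
  { intros u Hs U HU. destruct (Hu (H C) (fun n => c ∘ u n)) as [m [_ Hm]].
    transitivity m; [symmetry|]; apply Hm; intro n.
    - rewrite <- comp_assoc, HU. reflexivity.
    - rewrite <- comp_assoc, Hdz, comp_assoc, <- fmap_comp, HU. symmetry; apply Hs. }
  destruct (Hterm Z dz) as [h [Hh Huniq]].
  split.
  - exists (fun n => h ∘ iota n). intro n.
    rewrite comp_assoc, Hh, <- comp_assoc, Hdz, comp_assoc, <- fmap_comp. reflexivity.
  - intros u v Hsu Hsv n.
    destruct (Hu C u) as [U [HU _]]. destruct (Hu C v) as [V [HV _]].
    rewrite <- HU, <- HV.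
    rewrite <- (Huniq U (key u Hsu U HU)), <- (Huniq V (key v Hsv V HV)). reflexivity.
Qed.

Lemma step (A : Category) (H M : Functor A A) (lam : forall a, hom (M (H a)) (H (M a)))
  (C : A) (c : hom C (H C)) (b : hom (M C) C)
  (Hbeq : c ∘ b = fmap H b ∘ lam C ∘ fmap M c)
  (Hnat : is_natural (Fcomp M H) (Fcomp H M) lam)
  (Y Z : A) (f : hom Y C) (g : hom Z C) (dl : hom Y (H Z)) :
  c ∘ f = fmap H g ∘ dl ->
  c ∘ (b ∘ fmap M f) = fmap H (b ∘ fmap M g) ∘ (lam Z ∘ fmap M dl).
Proof.
  intro E. rewrite comp_assoc, Hbeq. rewrite <- comp_assoc, <- fmap_comp, E.
  pose proof (Hnat _ _ g) as N; simpl in N.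
  rewrite !fmap_comp, !comp_assoc.
  rewrite <- (comp_assoc (fmap H b) (lam C)), N, !comp_assoc. reflexivity.
Qed.

Lemma b_eta (A : Category) (H M : Functor A A) (lam : forall a, hom (M (H a)) (H (M a)))
  (C : A) (c : hom C (H C)) (b : hom (M C) C) (eta : forall a, hom a (M a))
  (Hterm : is_terminal_coalgebra H c)
  (Heta : is_natural (Fid A) M eta)
  (Hlam : is_distributive_law M H eta lam)
  (Hbeq : c ∘ b = fmap H b ∘ lam C ∘ fmap M c) : b ∘ eta C = idm C.
Proof.
  destruct (Hterm C c) as [h [_ Hu]].
  rewrite <- (Hu (b ∘ eta C)), (Hu (idm C)); [reflexivity| |].
  - rewrite fmap_id, comp_id_l, comp_id_r. reflexivity.
  - pose proof (Heta _ _ c) as N; simpl in N.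
    rewrite comp_assoc, Hbeq, <- comp_assoc, <- N, comp_assoc, <- (comp_assoc (fmap H b)).
    rewrite (proj2 Hlam), <- fmap_comp. reflexivity.
Qed.

Lemma endo_id (A : Category) (H : Functor A A) (C : A) (c : hom C (H C))
  (Hterm : is_terminal_coalgebra H c) (f : hom C C) :
  c ∘ f = fmap H f ∘ c -> f = idm C.
Proof.
  intro E. destruct (Hterm C c) as [h [_ Hu]].
  rewrite <- (Hu f E). apply Hu. rewrite fmap_id, comp_id_l, comp_id_r. reflexivity.
Qed.

Lemma copair_ext (A : Category) (cp : HasCoproducts A) (a b x : A)
  (f g : hom (coprod cp a b) x) : f ∘ cinl cp = g ∘ cinl cp -> f ∘ cinr cp = g ∘ cinr cp -> f = g.
Proof.
  intros E1 E2. rewrite (@copair_unique A cp a b x (f ∘ cinl cp) (f ∘ cinr cp) f eq_refl eq_refl).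
  symmetry; apply copair_unique; symmetry; assumption.
Qed.

Lemma comp_copair (A : Category) (cp : HasCoproducts A) (a b x y : A)
  (f : hom a x) (g : hom b x) (m : hom x y) :
  m ∘ copair cp f g = copair cp (m ∘ f) (m ∘ g).
Proof.
  apply copair_unique; rewrite <- comp_assoc; [rewrite copair_inl | rewrite copair_inr]; reflexivity.
Qed.

Lemma copair_map (A : Category) (cp : HasCoproducts A) (a b a' b' x : A)
  (f : hom a' x) (g : hom b' x) (h : hom a a') (i : hom b b') :
  copair cp f g ∘ coprod_map cp h i = copair cp (f ∘ h) (g ∘ i).
Proof.
  unfold coprod_map. rewrite comp_copair, !comp_assoc, copair_inl, copair_inr. reflexivity.
Qed.

Fixpoint iterM (A : Category) (M : Functor A A) (n : nat) (V : A) : A :=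
  match n with 0 => V | S m => M (iterM A M m V) end.
Arguments iterM {A} M n V.

Fixpoint delta (A : Category) (H M : Functor A A) (lam : forall a, hom (M (H a)) (H (M a)))
  (V : A) (d0 : hom V (H (M (M V)))) (n : nat) :
  hom (iterM M n V) (H (iterM M (S (S n)) V)) :=
  match n as n0 return hom (iterM M n0 V) (H (iterM M (S (S n0)) V)) with
  | 0 => d0
  | S m => lam _ ∘ fmap M (delta A H M lam V d0 m)
  end.
Arguments delta {A} H M lam {V} d0 n.

Fixpoint vfam (A : Category) (M : Functor A A) (C : A) (b : hom (M C) C) (V : A)
  (v0 : hom V C) (n : nat) : hom (iterM M n V) C :=
  match n as n0 return hom (iterM M n0 V) C with
  | 0 => v0
  | S m => b ∘ fmap M (vfam A M C b V v0 m)
  end.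
Arguments vfam {A} M {C} b {V} v0 n.

Lemma etaeta (A : Category) (M : Functor A A) (C : A) (b : hom (M C) C)
  (eta : forall a, hom a (M a)) (Heta : is_natural (Fid A) M eta)
  (Hbe : b ∘ eta C = idm C) (V W : A) (w0 : hom V C) (x : hom W V) :
  (b ∘ fmap M (b ∘ fmap M w0)) ∘ ((eta (M V) ∘ eta V) ∘ x) = w0 ∘ x.
Proof.
  pose proof (Heta _ _ w0) as N1; simpl in N1.
  pose proof (Heta _ _ (b ∘ fmap M w0)) as N2; simpl in N2.
  rewrite !comp_assoc.
  rewrite <- (comp_assoc b), <- N2, comp_assoc, Hbe, comp_id_l.
  rewrite <- (comp_assoc b (fmap M w0)), <- N1, comp_assoc, Hbe, comp_id_l.
  reflexivity.
Qed.

Lemma Tlem1 (A : Category) (H M : Functor A A) (lam : forall a, hom (M (H a)) (H (M a)))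
  (C : A) (c : hom C (H C)) (cinv : hom (H C) C) (b : hom (M C) C)
  (Hc1 : c ∘ cinv = idm (H C))
  (Hbeq : c ∘ b = fmap H b ∘ lam C ∘ fmap M c)
  (Hnat : is_natural (Fcomp M H) (Fcomp H M) lam) (X : A) (s : hom X C) :
  c ∘ ((b ∘ fmap M (cinv ∘ fmap H b)) ∘ fmap M (fmap H (fmap M s)))
  = fmap H (b ∘ fmap M (b ∘ fmap M s)) ∘ lam (M X).
Proof.
  pose proof (Hnat _ _ (b ∘ fmap M s)) as N; simpl in N.
  rewrite !fmap_comp, <- !comp_assoc in N.
  rewrite !comp_assoc, Hbeq.
  rewrite <- (comp_assoc _ (fmap M c)), <- fmap_comp, comp_assoc, Hc1, comp_id_l.
  rewrite !fmap_comp, <- !comp_assoc, N. reflexivity.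
Qed.

Lemma Tlem2 (A : Category) (H M : Functor A A) (lam : forall a, hom (M (H a)) (H (M a)))
  (C : A) (b : hom (M C) C)
  (Hnat : is_natural (Fcomp M H) (Fcomp H M) lam) (X V : A) (i : hom X V) (w0 : hom V C) :
  fmap H (b ∘ fmap M (b ∘ fmap M w0)) ∘ (lam (M V) ∘ fmap M (fmap H (fmap M i)))
  = fmap H (b ∘ fmap M (b ∘ fmap M (w0 ∘ i))) ∘ lam (M X).
Proof.
  pose proof (Hnat _ _ (fmap M i)) as N; simpl in N.
  rewrite !fmap_comp, <- !comp_assoc, N. reflexivity.
Qed.

Lemma c_mono (A : Category) (H : Functor A A) (C : A) (c : hom C (H C)) (cinv : hom (H C) C)
  (Hc2 : cinv ∘ c = idm C) (X : A) (f g : hom X C) : c ∘ f = c ∘ g -> f = g.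
Proof.
  intro E. rewrite <- (comp_id_l f), <- (comp_id_l g), <- Hc2, <- !comp_assoc, E. reflexivity.
Qed.

Theorem mainTheorem20 (A : Category) (cp : HasCoproducts A) (pr : HasProducts A)
  (Hcoc : cocomplete A)
  (H : Functor A A) (C : A) (c : hom C (H C)) (cinv : hom (H C) C)
  (Hterm : is_terminal_coalgebra H c)
  (Hc1 : c ∘ cinv = idm (H C)) (Hc2 : cinv ∘ c = idm C)
  (M : Functor A A) (eta : forall a, hom a (M a))
  (Heta : is_natural ((Fid A)) M eta)
  (lam : forall a, hom (M (H a)) (H (M a)))
  (Hlam : is_distributive_law M H eta lam)
  (b : hom (M C) C) (Hb : is_lambda_interpretation M H lam c b) :
  let k : hom (H (M C)) C := cinv ∘ fmap H b in
  let k' : hom (M (H (M C))) C := b ∘ fmap M k in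
  completely_iterative cp (Fcomp M (Fcomp H M)) k'.
Proof.
  intros k k'. unfold completely_iterative. intros X e.
  pose proof (proj1 Hb) as Hbeq. pose proof (proj1 Hlam) as Hnat.
  pose proof (b_eta A H M lam C c b eta Hterm Heta Hlam Hbeq) as Hbe.
  set (Q := fmap H (eta (M (coprod cp X C)) ∘ eta (coprod cp X C) ∘ @cinr A cp X C) ∘ c).
  set (P := lam (M (coprod cp X C)) ∘ fmap M (fmap H (fmap M (@cinl A cp X C)))).
  set (d0 := copair cp (copair cp P Q ∘ e) Q : hom (coprod cp X C) (H (M (M (coprod cp X C))))).
  set (T := fun s : hom X C => fmap H (b ∘ fmap M (b ∘ fmap M s)) ∘ lam (M X)).
  assert (Erhs : forall s : hom X C,
    c ∘ (copair cp k' (idm C) ∘ coprod_map cp (fmap (Fcomp M (Fcomp H M)) s) (idm C) ∘ e)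
    = copair cp (T s) c ∘ e).
  { intro s. rewrite copair_map, comp_assoc, comp_copair, comp_id_l, comp_id_r.
    unfold T, k', k. simpl. rewrite (Tlem1 A H M lam C c cinv b Hc1 Hbeq Hnat). reflexivity. }
  assert (EQ : forall w0 : hom (coprod cp X C) C, w0 ∘ @cinr A cp X C = idm C ->
     fmap H (b ∘ fmap M (b ∘ fmap M w0)) ∘ Q = c).
  { intros w0 Hw. unfold Q. rewrite comp_assoc, <- fmap_comp.
    rewrite (etaeta A M C b eta Heta Hbe), Hw, fmap_id, comp_id_l. reflexivity. }
  assert (Ed0 : forall w0 : hom (coprod cp X C) C, w0 ∘ @cinr A cp X C = idm C ->
     fmap H (b ∘ fmap M (b ∘ fmap M w0)) ∘ d0 ∘ @cinl A cp X C
     = copair cp (T (w0 ∘ @cinl A cp X C)) c ∘ e).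
  { intros w0 Hw. unfold d0.
    rewrite <- comp_assoc, copair_inl, comp_assoc, comp_copair.
    rewrite (EQ w0 Hw). unfold P. rewrite (Tlem2 A H M lam C b Hnat). reflexivity. }
  destruct (sol_ex_uniq A Hcoc H C c Hterm (fun n => iterM M n (coprod cp X C)) (delta H M lam d0))
    as [[u Hu] Huniq].
  destruct (sol_ex_uniq A Hcoc H C c Hterm (fun n => iterM M (S n) (coprod cp X C))
              (fun n => delta H M lam d0 (S n))) as [_ Huniq1].
  assert (F1 : forall n, u (S n) = b ∘ fmap M (u n)).
  { intro n. apply (Huniq1 (fun n => u (S n)) (fun n => b ∘ fmap M (u n))).
    - intro m. exact (Hu (S m)).
    - intro m. exact (step A H M lam C c b Hbeq Hnat _ _ (u m) (u (S (S m)))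
                        (delta H M lam d0 m) (Hu m)). }
  assert (U2 : u 2 = b ∘ fmap M (b ∘ fmap M (u 0))).
  { rewrite (F1 1), (F1 0). reflexivity. }
  assert (F3 : u 0 ∘ @cinr A cp X C = idm C).
  { apply (endo_id A H C c Hterm).
    rewrite comp_assoc, (Hu 0). simpl. rewrite U2. unfold d0.
    rewrite <- comp_assoc, copair_inr. unfold Q.
    rewrite comp_assoc, <- fmap_comp, (etaeta A M C b eta Heta Hbe). reflexivity. }
  exists (u 0 ∘ @cinl A cp X C). split.
  - apply (c_mono A H C c cinv Hc2). rewrite Erhs.
    rewrite comp_assoc, (Hu 0). simpl. rewrite U2. apply Ed0. exact F3.
  - intros s' Hs'.
    set (v0 := copair cp s' (idm C) : hom (coprod cp X C) C).
    assert (Hv0 : v0 ∘ @cinr A cp X C = idm C) by (unfold v0; apply copair_inr).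
    assert (Sv : is_sol H c (fun n => iterM M n (coprod cp X C)) (delta H M lam d0) (vfam M b v0)).
    { intro n. induction n as [|m IH].
      - simpl. apply (copair_ext A cp).
        + rewrite Ed0 by exact Hv0. unfold v0 at 1. rewrite <- comp_assoc, copair_inl.
          unfold v0. rewrite copair_inl, <- (Erhs s'). f_equal. exact Hs'.
        + unfold d0. rewrite <- !comp_assoc, !copair_inr. unfold v0 at 1.
          rewrite copair_inr, comp_id_r. symmetry. apply EQ. exact Hv0.
      - exact (step A H M lam C c b Hbeq Hnat _ _ (vfam M b v0 m) (vfam M b v0 (S (S m)))
                        (delta H M lam d0 m) IH). }
    pose proof (Huniq u (vfam M b v0) Hu Sv 0) as E0. simpl in E0.
    rewrite E0. unfold v0. apply copair_inl.
Qed.
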